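(* Let $x\cdot y$ be a PA-structure on $(\mathfrak{g},\mathfrak{n})$, where $\mathfrak{g}$ and $\mathfrak{n}$ are $2$-step nilpotent. Then the product $x\circ y=\frac12(x\cdot y+y\cdot x)$ defines a CPA-structure on $\mathfrak{g}$ if and only if $$[L(x)+R(x),\mathrm{ad}(y)]=\mathrm{ad}(x\cdot y+y\cdot x)\quad\text{for all }x,y\in V.$$ (Equivalently, $x\cdot[y,z]+[y,z]\cdot x=[y,x\cdot z]+[y,z\cdot x]-[z,x\cdot y]-[z,y\cdot x]$ for all $x,y,z\in V$.)
   Context: Let $K$ be a field of characteristic zero and $V$ a finite-dimensional vector space over $K$. Let $\mathfrak{g}=(V,[\,,])$ and $\mathfrak{n}=(V,\{\,,\})$ be two Lie algebra structures on $V$. A post-Lie algebra structure (PA-structure) on the pair $(\mathfrak{g},\mathfrak{n})$ is a $K$-bilinear product $x\cdot y$ on $V$ satisfying, for all $x,y,z\in V$: (i) $x\cdot y-y\cdot x=[x,y]-\{x,y\}$; (ii) $[x,y]\cdot z=x\cdot(y\cdot z)-y\cdot(x\cdot z)$; (iii) $x\cdot\{y,z\}=\{x\cdot y,z\}+\{y,x\cdot z\}$. Write $L(x)(y)=x\cdot y$, $R(x)(y)=y\cdot x$, $\mathrm{ad}(x)(y)=[x,y]$; brackets of operators are commutators in $\mathrm{End}(V)$. A commutative post-Lie algebra structure (CPA-structure) on a Lie algebra $(V,[\,,])$ is a bilinear product $x\circ y$ on $V$ with $x\circ y=y\circ x$, $[x,y]\circ z=x\circ(y\circ z)-y\circ(x\circ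 z)$, and $x\circ[y,z]=[x\circ y,z]+[y,x\circ z]$ for all $x,y,z$. A Lie algebra is called $2$-step nilpotent here if it is nilpotent of class at most $2$, i.e. all brackets of the form $[[x,y],z]$ vanish. *)

(* Defs.v *)
From HB Require Import structures.
From mathcomp Require Import all_boot all_order all_algebra.
Set Implicit Arguments. Unset Strict Implicit. Unset Printing Implicit Defensive.
Import GRing.Theory.
Local Open Scope ring_scope.

Section Defs.
Variables (K : fieldType) (V : vectType K).

Definition bilinear_op (p : V -> V -> V) : Prop :=
  (forall (a : K) (x y z : V), p (a *: x + y) z = a *: p x z + p y z) /\
  (forall (a : K) (x y z : V), p x (a *: y + z) = a *: p x y + p x z).

Definition lie_bracket (br : V -> V -> V) : Prop :=
  [/\ bilinear_op br,
      (forall x, br x x = 0) &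
      (forall x y z, br x (br y z) + br y (br z x) + br z (br x y) = 0)].

Definition two_step_nilpotent (br : V -> V -> V) : Prop :=
  forall x y z, br (br x y) z = 0.

(* PA-structure x . y on the pair (g, n) = ((V,br), (V,nbr)) *)
Definition PA_structure (br nbr dot : V -> V -> V) : Prop :=
  [/\ bilinear_op dot,
      (forall x y, dot x y - dot y x = br x y - nbr x y),
      (forall x y z, dot (br x y) z = dot x (dot y z) - dot y (dot x z)) &
      (forall x y z, dot x (nbr y z) = nbr (dot x y) z + nbr y (dot x z))].

Definition CPA_structure (br circ : V -> V -> V) : Prop :=
  [/\ bilinear_op circ,
      (forall x y, circ x y = circ y x),
      (forall x y z, circ (br x y) z = circ x (circ y z) - circ y (circ x z)) &
      (forall x y z, circ x (br y z) = br (circ x y) z + br y (circ x z))].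

Definition Lop (dot : V -> V -> V) (x : V) : V -> V := fun y => dot x y.
Definition Rop (dot : V -> V -> V) (x : V) : V -> V := fun y => dot y x.
Definition adop (br : V -> V -> V) (x : V) : V -> V := fun y => br x y.
Definition addop (f g : V -> V) : V -> V := fun v => f v + g v.
Definition opcomm (f g : V -> V) : V -> V := fun v => f (g v) - g (f v).

End Defs.

(* Main.v *)
Require Import Defs.
From HB Require Import structures.
From mathcomp Require Import all_boot all_order all_algebra.
From Stdlib Require Import FunctionalExtensionality.
Set Implicit Arguments. Unset Strict Implicit. Unset Printing Implicit Defensive.
Import GRing.Theory.
Local Open Scope ring_scope.

Inductive zexpr := ZAtom of nat | ZZero | ZAdd of zexpr & zexpr | ZOpp of zexpr | ZMulz of zexpr & int.

Section ZRefl.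
Variable M : zmodType.
Fixpoint zeval (env : seq M) (e : zexpr) : M :=
  match e with
  | ZAtom n => nth 0 env n
  | ZZero => 0
  | ZAdd a b => zeval env a + zeval env b
  | ZOpp a => - zeval env a
  | ZMulz a c => zeval env a *~ c
  end.
End ZRefl.

Fixpoint znorm (e : zexpr) (i : nat) : int :=
  match e with
  | ZAtom n => Posz (i == n)
  | ZZero => 0
  | ZAdd a b => znorm a i + znorm b i
  | ZOpp a => - znorm a i
  | ZMulz a c => znorm a i * c
  end.

Definition zcheck (N : nat) (l r : zexpr) : bool :=
  all (fun i => znorm l i == znorm r i) (iota 0 N).

Lemma zeval_sound (M : zmodType) (env : seq M) e :
  zeval env e = \sum_(i < size env) env`_i *~ znorm e i.
Proof.
elim: e => [n||a IHa b IHb|a IHa|a IHa c] /=.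
- case: (ltnP n (size env)) => Hn.
  + rewrite (bigD1 (Ordinal Hn)) //= eqxx mulr1z big1 ?addr0 // => i /negbTE.
    by rewrite -val_eqE /= => ->; rewrite mulr0z.
  + rewrite nth_default // big1 // => i _.
    have : (i : nat) != n by rewrite neq_ltn (leq_trans (ltn_ord i) Hn).
    by move/negbTE => ->; rewrite mulr0z.
- by rewrite big1 // => i _; rewrite mulr0z.
- by rewrite IHa IHb -big_split /=; apply: eq_bigr => i _; rewrite mulrzDr.
- by rewrite IHa -sumrN; apply: eq_bigr => i _; rewrite mulrNz.
- by rewrite IHa mulrz_suml; apply: eq_bigr => i _; rewrite mulrzA.
Qed.

Lemma zcheck_sound (M : zmodType) (env : seq M) l r :
  zcheck (size env) l r -> zeval env l = zeval env r.
Proof.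
move/allP => H; rewrite !zeval_sound; apply: eq_bigr => i _.
by rewrite (eqP (H i _)) // mem_iota /= add0n ltn_ord.
Qed.

Ltac zfind t env :=
  match env with
  | cons ?u ?e =>
    match constr:(tt) with
    | _ => let _ := match goal with _ => unify t u end in constr:(0%nat)
    | _ => let n := zfind t e in constr:(S n)
    end
  end.

Ltac zmem t env :=
  match env with
  | nil => constr:(false)
  | cons ?u ?e =>
    match constr:(tt) with
    | _ => let _ := match goal with _ => unify t u end in constr:(true)
    | _ => zmem t e
    end
  end.

Ltac zatoms t env :=
  match t with
  | ?a + ?b => let env := zatoms a env in zatoms b env
  | - ?a => zatoms a env
  | 0 => env
  | ?a *~ _ => zatoms a env
  | _ => let b := zmem t env in
         match b with true => env | false => constr:(cons t env) end
  end.

Ltac zreify t env :=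
  match t with
  | ?a + ?b => let x := zreify a env in let y := zreify b env in constr:(ZAdd x y)
  | - ?a => let x := zreify a env in constr:(ZOpp x)
  | 0 => constr:(ZZero)
  | ?a *~ ?c => let x := zreify a env in constr:(ZMulz x c)
  | _ => let n := zfind t env in constr:(ZAtom n)
  end.

Ltac zmod_eq :=
  match goal with
  | |- @eq ?T ?l ?r =>
    let env := zatoms l (@nil T) in
    let env := zatoms r env in
    let el := zreify l env in
    let er := zreify r env in
    change (zeval env el = zeval env er);
    apply: zcheck_sound; vm_compute; reflexivity
  end.


Section Bil.
Variables (K : fieldType) (V : vectType K) (p : V -> V -> V).
Hypothesis hp : bilinear_op p.

Lemma bDl a b c : p (a + b) c = p a c + p b c.
Proof. by have := hp.1 1 a b c; rewrite !scale1r. Qed.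
Lemma bDr a b c : p c (a + b) = p c a + p c b.
Proof. by have := hp.2 1 c a b; rewrite !scale1r. Qed.
Lemma b0l c : p 0 c = 0.
Proof. by apply: (@addrI _ (p 0 c)); rewrite -bDl !addr0. Qed.
Lemma b0r c : p c 0 = 0.
Proof. by apply: (@addrI _ (p c 0)); rewrite -bDr !addr0. Qed.
Lemma bZl a x z : p (a *: x) z = a *: p x z.
Proof. by have := hp.1 a x 0 z; rewrite !addr0 b0l addr0. Qed.
Lemma bZr a x z : p z (a *: x) = a *: p z x.
Proof. by have := hp.2 a z x 0; rewrite !addr0 b0r addr0. Qed.
Lemma bNl x z : p (- x) z = - p x z.
Proof. by rewrite -scaleN1r bZl scaleN1r. Qed.
Lemma bNr x z : p z (- x) = - p z x.
Proof. by rewrite -scaleN1r bZr scaleN1r. Qed.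
End Bil.

Lemma lc_step (M : zmodType) (c : int) (e G : M) : e = 0 -> G - e *~ c = 0 -> G = 0.
Proof. by move=> -> ; rewrite mul0rz subr0. Qed.

Ltac expand3 hb hn hd h :=
  rewrite ?(bDl hb, bDr hb, bNl hb, bNr hb, b0l hb, b0r hb,
            bDl hn, bDr hn, bNl hn, bNr hn, b0l hn, b0r hn,
            bDl hd, bDr hd, bNl hd, bNr hd, b0l hd, b0r hd) in h.
Ltac expand3g hb hn hd :=
  rewrite ?(bDl hb, bDr hb, bNl hb, bNr hb, b0l hb, b0r hb,
            bDl hn, bDr hn, bNl hn, bNr hn, b0l hn, b0r hn,
            bDl hd, bDr hd, bNl hd, bNr hd, b0l hd, b0r hd).

Lemma key (K : fieldType) (V : vectType K) (br nbr dot : V -> V -> V)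
  (hb : bilinear_op br) (hn : bilinear_op nbr) (hd : bilinear_op dot)
  (Ei : forall a b, dot a b - dot b a - (br a b - nbr a b) = 0)
  (Eab : forall a b, br a b + br b a = 0)
  (Ean : forall a b, nbr a b + nbr b a = 0)
  (Eii : forall a b c, dot (br a b) c - (dot a (dot b c) - dot b (dot a c)) = 0)
  (Eiii : forall a b c, dot a (nbr b c) - (nbr (dot a b) c + nbr b (dot a c)) = 0)
  (Ejb : forall a b c, br a (br b c) + br b (br c a) + br c (br a b) = 0)
  (Ejn : forall a b c, nbr a (nbr b c) + nbr b (nbr c a) + nbr c (nbr a b) = 0)
  (Enb : forall a b c, br (br a b) c = 0)
  (Enn : forall a b c, nbr (nbr a b) c = 0)
  (EH : forall a b c, dot a (br b c) + dot (br b c) a - br b (dot a c + dot c a)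
                       - br (dot a b + dot b a) c = 0)
  (x y z : V) :
  (dot (br x y) z + dot z (br x y)) *~ 2
  - (dot x (dot y z + dot z y) + dot (dot y z + dot z y) x)
  + (dot y (dot x z + dot z x) + dot (dot x z + dot z x) y) = 0.
Proof.
expand3g hb hn hd.
have h1 := congr1 (fun t => nbr t z) (Ei x y); cbv beta in h1.
expand3 hb hn hd h1; apply: (@lc_step _ (Negz 1) _ _ h1).
have h2 := Ei (br x y) z.
expand3 hb hn hd h2; apply: (@lc_step _ (Negz 1) _ _ h2).
have h3 := Eab (br x y) z.
expand3 hb hn hd h3; apply: (@lc_step _ (Negz 0) _ _ h3).
have h4 := Ean (nbr x y) z.
expand3 hb hn hd h4; apply: (@lc_step _ (Posz 1) _ _ h4).
have h5 := Eii x y z.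
expand3 hb hn hd h5; apply: (@lc_step _ (Posz 4) _ _ h5).
have h6 := Eiii x y z.
expand3 hb hn hd h6; apply: (@lc_step _ (Negz 1) _ _ h6).
have h7 := Ejb x y z.
expand3 hb hn hd h7; apply: (@lc_step _ (Posz 1) _ _ h7).
have h8 := Ejn x y z.
expand3 hb hn hd h8; apply: (@lc_step _ (Negz 0) _ _ h8).
have h9 := Enb x y z.
expand3 hb hn hd h9; apply: (@lc_step _ (Negz 0) _ _ h9).
have h10 := Enn x y z.
expand3 hb hn hd h10; apply: (@lc_step _ (Posz 1) _ _ h10).
have h11 := EH x y z.
expand3 hb hn hd h11; apply: (@lc_step _ (Posz 1) _ _ h11).
have h12 := congr1 (fun t => dot y t) (Ei x z); cbv beta in h12.
expand3 hb hn hd h12; apply: (@lc_step _ (Negz 0) _ _ h12).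
have h13 := congr1 (fun t => dot t y) (Ei x z); cbv beta in h13.
expand3 hb hn hd h13; apply: (@lc_step _ (Negz 0) _ _ h13).
have h14 := congr1 (fun t => br y t) (Ei x z); cbv beta in h14.
expand3 hb hn hd h14; apply: (@lc_step _ (Negz 0) _ _ h14).
have h15 := congr1 (fun t => br y t) (Eab x z); cbv beta in h15.
expand3 hb hn hd h15; apply: (@lc_step _ (Negz 0) _ _ h15).
have h16 := congr1 (fun t => nbr y t) (Ean x z); cbv beta in h16.
expand3 hb hn hd h16; apply: (@lc_step _ (Posz 1) _ _ h16).
have h17 := Ei (dot x z) y.
expand3 hb hn hd h17; apply: (@lc_step _ (Posz 2) _ _ h17).
have h18 := Eab (dot x z) y.
expand3 hb hn hd h18; apply: (@lc_step _ (Posz 2) _ _ h18).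
have h19 := Ean (dot x z) y.
expand3 hb hn hd h19; apply: (@lc_step _ (Negz 1) _ _ h19).
have h20 := Ei (nbr x z) y.
expand3 hb hn hd h20; apply: (@lc_step _ (Posz 1) _ _ h20).
have h21 := Eab (nbr x z) y.
expand3 hb hn hd h21; apply: (@lc_step _ (Posz 1) _ _ h21).
have h22 := Ean (nbr x z) y.
expand3 hb hn hd h22; apply: (@lc_step _ (Negz 0) _ _ h22).
have h23 := Eiii y x z.
expand3 hb hn hd h23; apply: (@lc_step _ (Posz 2) _ _ h23).
have h24 := EH y x z.
expand3 hb hn hd h24; apply: (@lc_step _ (Negz 0) _ _ h24).
have h25 := congr1 (fun t => dot x t) (Ei y z); cbv beta in h25.
expand3 hb hn hd h25; apply: (@lc_step _ (Posz 1) _ _ h25).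
have h26 := congr1 (fun t => dot t x) (Ei y z); cbv beta in h26.
expand3 hb hn hd h26; apply: (@lc_step _ (Posz 1) _ _ h26).
have h27 := congr1 (fun t => br x t) (Ei y z); cbv beta in h27.
expand3 hb hn hd h27; apply: (@lc_step _ (Posz 1) _ _ h27).
have h28 := Ei (dot y z) x.
expand3 hb hn hd h28; apply: (@lc_step _ (Negz 1) _ _ h28).
have h29 := Eab (dot y z) x.
expand3 hb hn hd h29; apply: (@lc_step _ (Negz 1) _ _ h29).
have h30 := Ean (dot y z) x.
expand3 hb hn hd h30; apply: (@lc_step _ (Posz 2) _ _ h30).
have h31 := Ei (nbr y z) x.
expand3 hb hn hd h31; apply: (@lc_step _ (Negz 0) _ _ h31).
have h32 := Eab (nbr y z) x.
expand3 hb hn hd h32; apply: (@lc_step _ (Negz 0) _ _ h32).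
have h33 := Ean (nbr y z) x.
expand3 hb hn hd h33; apply: (@lc_step _ (Posz 1) _ _ h33).
zmod_eq.
Qed.

Theorem proposition4p3 (K : fieldType) (V : vectType K)
  (charK0 : [pchar K] =i pred0)
  (br nbr dot : V -> V -> V)
  (hg : lie_bracket br) (hn : lie_bracket nbr)
  (hg2 : two_step_nilpotent br) (hn2 : two_step_nilpotent nbr)
  (hPA : PA_structure br nbr dot) :
  CPA_structure br (fun x y => 2%:R^-1 *: (dot x y + dot y x)) <->
  (forall x y : V,
     opcomm (addop (Lop dot x) (Rop dot x)) (adop br y)
     = adop br (dot x y + dot y x)).
Proof.
have two : (2%:R : K) != 0 by rewrite ((pcharf0P _).1 charK0).
move: hPA => [hd hi hii hiii]; move: hg => [hb haa hjb]; move: hn => [hnn naa hjn].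
split.
- case=> _ _ _ hiv x y; apply: FunctionalExtensionality.functional_extensionality => v.
  rewrite /opcomm /addop /Lop /Rop /adop.
  have := hiv x y v; rewrite (bZl hb) (bZr hb) -scalerDr.
  move/(congr1 (fun w => 2%:R *: w)); rewrite !scalerA mulfV // !scale1r => h.
  by rewrite h addrK.
- move=> H.
  have Ei : forall a b, dot a b - dot b a - (br a b - nbr a b) = 0.
    by move=> a b; rewrite hi subrr.
  have Eab : forall a b, br a b + br b a = 0.
    move=> a b; have := haa (a + b).
    by rewrite (bDl hb) !(bDr hb) !haa add0r addr0.
  have Ean : forall a b, nbr a b + nbr b a = 0.
    move=> a b; have := naa (a + b).
    by rewrite (bDl hnn) !(bDr hnn) !naa add0r addr0.
  have Eii : forall a b c, dot (br a b) c - (dot a (dot b c) - dot b (dot a c)) = 0.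
    by move=> a b c; rewrite hii subrr.
  have Eiii : forall a b c, dot a (nbr b c) - (nbr (dot a b) c + nbr b (dot a c)) = 0.
    by move=> a b c; rewrite hiii subrr.
  have EH : forall a b c, dot a (br b c) + dot (br b c) a - br b (dot a c + dot c a)
                       - br (dot a b + dot b a) c = 0.
    move=> a b c; apply/eqP; rewrite subr_eq0; apply/eqP.
    exact: (congr1 (fun f => f c) (H a b)).
  have kk := key hb hnn hd Ei Eab Ean Eii Eiii hjb hjn hg2 hn2 EH.
  split.
  + split=> a x y z /=.
    * rewrite (bDl hd) (bDr hd) (bZl hd) (bZr hd) !scalerDr !scalerA [a * _]mulrC.
      zmod_eq.
    * rewrite (bDl hd) (bDr hd) (bZl hd) (bZr hd) !scalerDr !scalerA [a * _]mulrC.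
      zmod_eq.
  + by move=> x y; rewrite addrC.
  + move=> x y z /=.
    rewrite !(bZl hd) !(bZr hd) -!scalerDr !scalerA -scalerBr.
    have e : (dot x (dot y z + dot z y) + dot (dot y z + dot z y) x) -
             (dot y (dot x z + dot z x) + dot (dot x z + dot z x) y) =
             (dot (br x y) z + dot z (br x y)) *~ 2.
      apply/eqP; rewrite -subr_eq0; apply/eqP; rewrite -oppr0 -(kk x y z); zmod_eq.
    rewrite e -[_ *~ 2]/(_ *+ 2) -scaler_nat scalerA -mulrA mulVf // mulr1.
    done.
  + move=> x y z /=.
    rewrite (bZl hb) (bZr hb) -scalerDr; congr (_ *: _).
    have h : (dot x (br y z) + dot (br y z) x) - br y (dot x z + dot z x)
             = br (dot x y + dot y x) z := congr1 (fun f => f z) (H x y).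
    by rewrite -h subrK.
Qed.
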